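(* Let $$\Gamma=\left\langle\mathbb{Z}^3,\left(0,\begin{pmatrix}1&-1&0\\0&-1&0\\0&0&-1\end{pmatrix}\right)\right\rangle\subseteq\mathrm{Aff}(\mathbb{R}^3),$$ with holonomy group $F\subseteq\mathrm{GL}_3(\mathbb{Z})$ (of order $2$, generated by the displayed matrix), and let $\varphi=\xi_{(d,D)}\in\mathrm{Aut}(\Gamma)$. Define $\delta=1$ if the third component $d_3$ of $d$ is an integer and $\delta=0$ otherwise. Then $$R(\varphi)=\left(\frac12\sum_{A\in F}|\det(I_3-AD)|_\infty\right)+4\delta.$$
   Context: $\mathrm{Aff}(\mathbb{R}^3)=\mathbb{R}^3\rtimes\mathrm{GL}_3(\mathbb{R})$ with multiplication $(d_1,D_1)(d_2,D_2)=(d_1+D_1d_2,D_1D_2)$; $\mathbb{Z}^3$ denotes $\{(z,I_3)\mid z\in\mathbb{Z}^3\}$. For $(d,D)\in\mathrm{Aff}(\mathbb{R}^3)$, $\xi_{(d,D)}$ denotes $\gamma\mapsto(d,D)\gamma(d,D)^{-1}$; every automorphism of $\Gamma$ has this form (and $d$ is uniquely determined by the automorphism). $R(\varphi)\in\{1,2,\dots\}\cup\{\infty\}$ is the number of classes of the relation $g\sim g'\iff\exists h\in\Gamma: g=hg'\varphi(h)^{-1}$. For an integer $x$, $|x|_\infty=|x|$ if $x\neq0$ and $\infty$ if $x=0$. *)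

(* Defs.v *)
From HB Require Import structures.
From mathcomp Require Import all_boot all_order all_algebra.
From mathcomp Require Import reals constructive_ereal.
Set Implicit Arguments. Unset Strict Implicit. Unset Printing Implicit Defensive.
Import Order.TTheory GRing.Theory Num.Theory.
Local Open Scope ring_scope.

Section Aff.
Variable R : realType.

(* Aff(R^3) = R^3 x| GL_3(R): pairs (d, D); D is required invertible where needed *)
Definition aff := ('cV[R]_3 * 'M[R]_3)%type.

Definition aff_mul (x y : aff) : aff := (x.1 + x.2 *m y.1, x.2 *m y.2).
Definition aff_inv (x : aff) : aff := (- (invmx x.2 *m x.1), invmx x.2).

Definition xi (dD : aff) (g : aff) : aff := aff_mul (aff_mul dD g) (aff_inv dD).

Definition int_vec (z : 'cV[R]_3) : Prop := forall i, z i 0 \is a Num.int.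

Definition Amat : 'M[R]_3 :=
  \matrix_(i < 3, j < 3)
    (if (i == 0 :> nat) && (j == 0 :> nat) then 1
     else if (i == 0 :> nat) && (j == 1 :> nat) then -1
     else if (i == j) then -1 else 0).

Inductive in_Gamma : aff -> Prop :=
| Gamma_trans z : int_vec z -> in_Gamma (z, 1%:M)
| Gamma_A : in_Gamma (0, Amat)
| Gamma_mul x y : in_Gamma x -> in_Gamma y -> in_Gamma (aff_mul x y)
| Gamma_inv x : in_Gamma x -> in_Gamma (aff_inv x).

Definition holF : seq 'M[R]_3 := [:: 1%:M; Amat].

(* xi_{(d,D)} restricts to an automorphism of Gamma (bijective onto Gamma;
   it is automatically a homomorphism, being a conjugation) *)
Definition xi_aut_Gamma (dD : aff) : Prop :=
  dD.2 \in unitmx /\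
  (forall g, in_Gamma g -> in_Gamma (xi dD g)) /\
  (forall g, in_Gamma g -> exists h, in_Gamma h /\ xi dD h = g).

Definition tw_conj (dD : aff) (g g' : aff) : Prop :=
  exists h, in_Gamma h /\ g = aff_mul (aff_mul h g') (aff_inv (xi dD h)).

Definition has_n_classes (dD : aff) (n : nat) : Prop :=
  exists f : 'I_n -> aff,
    (forall i, in_Gamma (f i)) /\
    (forall i j, tw_conj dD (f i) (f j) -> i = j) /\
    (forall g, in_Gamma g -> exists i, tw_conj dD g (f i)).

Definition infinitely_many_classes (dD : aff) : Prop :=
  forall n : nat, exists f : 'I_n -> aff,
    (forall i, in_Gamma (f i)) /\
    (forall i j, tw_conj dD (f i) (f j) -> i = j).

(* R(xi_{(d,D)}) = r, with r in {1,2,...} u {oo} encoded in \bar R *)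
Definition reidemeister_eq (dD : aff) (r : \bar R) : Prop :=
  match r with
  | +oo%E => infinitely_many_classes dD
  | (x%:E)%E => exists n : nat, x = n%:R /\ has_n_classes dD n
  | -oo%E => False
  end.

Definition abs_inf (x : R) : \bar R := if x == 0 then +oo%E else (`|x|)%:E.

Definition third_comp (d : 'cV[R]_3) : R := d (@Ordinal 3 2 isT) 0.

End Aff.

(* Main.v *)
Require Import Defs.
From HB Require Import structures.
From mathcomp Require Import all_boot all_order all_algebra.
From mathcomp Require Import reals constructive_ereal.
From mathcomp Require Import ring lra zify.
Set Implicit Arguments. Unset Strict Implicit. Unset Printing Implicit Defensive.
Import Order.TTheory GRing.Theory Num.Theory.
Local Open Scope ring_scope.

Definition ordm (s x : int) : 'I_(`|s|.-1).+1 := inord `|(x %% s)%Z|%N.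
Arguments ordm : simpl never.

Lemma ordm_lt s x : s != 0 -> (`|(x %% s)%Z|%N < (`|s|.-1).+1)%N.
Proof.
move=> s0; rewrite prednK ?absz_gt0 //.
have h1 := modz_ge0 x s0; have h2 := ltz_mod x s0. lia.
Qed.

Lemma ordmE s x y : s != 0 -> (ordm s x = ordm s y) <-> (x %% s = y %% s)%Z.
Proof.
move=> s0; split; last by rewrite /ordm => ->.
move/(congr1 val); rewrite /= /ordm !inordK ?ordm_lt //.
have := modz_ge0 x s0; have := modz_ge0 y s0; lia.
Qed.

Lemma ordm_surj s (k : 'I_(`|s|.-1).+1) : s != 0 -> ordm s (k%:Z) = k.
Proof.
move=> s0; apply: val_inj; rewrite /= /ordm inordK ?ordm_lt //.
have hk : (k < `|s|)%N by case: k => k /=; rewrite prednK ?absz_gt0.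
rewrite -modz_abs modz_small //; lia.
Qed.

Lemma det3 (R : comNzRingType) (A : 'M[R]_3) : \det A =
  A 0 0 * (A 1 1 * A 2 2 - A 1 2 * A 2 1)
  - A 0 1 * (A 1 0 * A 2 2 - A 1 2 * A 2 0)
  + A 0 2 * (A 1 0 * A 2 1 - A 1 1 * A 2 0).
Proof.
have -> : A = \matrix_(i,j) A (inord i) (inord j).
  by apply/matrixP=> i j; rewrite mxE !inord_val.
rewrite (expand_det_row _ 0) !big_ord_recl big_ord0 /cofactor.
rewrite !(expand_det_row _ 0) !big_ord_recl !big_ord0 /cofactor.
rewrite !det_mx11 !mxE /=.
rewrite !expr0 !expr1 ?exprS ?expr0; ring.
Qed.

Definition cv3 (R : nzRingType) (x y z : R) : 'cV[R]_3 := \col_(i < 3) nth 0 [:: x; y; z] i.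

Lemma abs_det_unit (L : 'M[int]_3) : L \in unitmx -> `|\det L|%N = 1%N.
Proof. rewrite unitmxE. move=> h. have : (\det L == 1) || (\det L == -1) by []. 
case/orP=> /eqP ->; done. Qed.

Lemma coker_fin (M : 'M[int]_3) : \det M != 0 ->
  exists (T : finType) (key : 'cV[int]_3 -> T) (rep : T -> 'cV[int]_3),
    [/\ #|T| = `|\det M|%N,
        (forall z z', key z = key z' <-> exists w, z - z' = M *m w) &
        (forall t, key (rep t) = t)].
Proof.
move=> dM.
have [L uL [R uR [d _ EM]]] := int_Smith_normal_form M.
set S := \matrix_(i, j) _ in EM.
have ES : S = diag_mx (\row_(i < 3) d`_i).
  by apply/matrixP=> i j; rewrite !mxE.
have detM : \det M = \det L * (d`_0 * (d`_1 * d`_2)) * \det R.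
  by rewrite EM !det_mulmx ES det_diag !big_ord_recl big_ord0 !mxE /= mulr1.
have [s0 [s1 s2]] : [/\ d`_0 != 0, d`_1 != 0 & d`_2 != 0].
  by move: dM; rewrite detM !mulf_eq0 !negb_or => /andP[/andP[_ /andP[-> /andP[-> ->]]] _].
pose T := ('I_(`|d`_0|.-1).+1 * 'I_(`|d`_1|.-1).+1 * 'I_(`|d`_2|.-1).+1)%type.
pose key (z : 'cV[int]_3) : T := let y := invmx L *m z in
   (ordm d`_0 (y 0 0), ordm d`_1 (y 1 0), ordm d`_2 (y 2 0)).
pose rep (t : T) : 'cV[int]_3 := L *m cv3 (t.1.1 : nat)%:Z (t.1.2 : nat)%:Z (t.2 : nat)%:Z.
exists T, key, rep; split.
- rewrite !card_prod !card_ord !prednK ?absz_gt0 // detM !abszM abs_det_unit //.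
  by rewrite abs_det_unit // mul1n muln1 mulnA.
- have keyE : forall z z', key z = key z' <->
      exists u, invmx L *m z - invmx L *m z' = S *m u.
    move=> z z'; rewrite /key; move: (invmx L *m z) (invmx L *m z') => y y'.
    split.
    + move=> E. have E0 := congr1 (fun p : T => p.1.1) E.
      have E1 := congr1 (fun p : T => p.1.2) E. have E2 := congr1 (fun p : T => p.2) E.
      rewrite /= in E0 E1 E2.
      move: E0 => /ordmE -/(_ s0) /eqP; rewrite eqz_mod_dvd => /dvdzP [q0 e0].
      move: E1 => /ordmE -/(_ s1) /eqP; rewrite eqz_mod_dvd => /dvdzP [q1 e1].
      move: E2 => /ordmE -/(_ s2) /eqP; rewrite eqz_mod_dvd => /dvdzP [q2 e2].
      exists (cv3 q0 q1 q2); rewrite ES mul_diag_mx.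
      apply/matrixP => i j; rewrite !mxE (ord1 j).
      case: i => [[|[|[|//]]] ?] /=.
      * by rewrite (_ : Ordinal _ = 0) ?e0 1?mulrC //; apply: val_inj.
      * by rewrite (_ : Ordinal _ = 1) ?e1 1?mulrC //; apply: val_inj.
      * by rewrite (_ : Ordinal _ = 2) ?e2 1?mulrC //; apply: val_inj.
    + case=> u; rewrite ES mul_diag_mx => /matrixP E.
      have Ei : forall i : 'I_3, modz (y i 0) d`_i = modz (y' i 0) d`_i.
        move=> i; apply/eqP; rewrite eqz_mod_dvd; apply/dvdzP; exists (u i 0).
        by have := E i ord0; rewrite !mxE => ->; rewrite mulrC.
      rewrite (proj2 (ordmE (y 0 0) (y' 0 0) s0) (Ei 0)).
      rewrite (proj2 (ordmE (y 1 0) (y' 1 0) s1) (Ei 1)).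
      by rewrite (proj2 (ordmE (y 2 0) (y' 2 0) s2) (Ei 2)).
  move=> z z'; rewrite keyE; split.
  + case=> u Eu; exists (invmx R *m u).
    by rewrite EM -!mulmxA mulKVmx // -Eu -mulmxBr mulKVmx.
  + case=> w Ew; exists (R *m w).
    by rewrite -mulmxBr Ew EM -!mulmxA mulKmx.
- move=> t; rewrite /key /rep mulKmx //.
  rewrite !mxE /= !ordm_surj //.
  by case: t => [[]].
Qed.

Lemma orbit_count (X : Type) (rel : X -> X -> Prop) (T : finType)
  (key : X -> T) (rep : T -> X) (tau : T -> T) :
  involutive tau -> (forall t, key (rep t) = t) ->
  (forall x y, rel x y <-> key x = key y \/ key x = tau (key y)) ->
  exists n, (2 * n = #|T| + #|[set t | tau t == t]|)%N /\
    exists f : 'I_n -> X, (forall i j, rel (f i) (f j) -> i = j) /\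
                          (forall x, exists i, rel x (f i)).
Proof.
move=> invt keyrep relE.
pose S := [set t | (enum_rank t <= enum_rank (tau t))%N].
pose F := [set t | tau t == t].
have FS : F \subset S by apply/subsetP=> t; rewrite !inE => /eqP ->.
have notS t : t \notin S -> tau t \in S /\ tau t \in S :\: F.
  rewrite !inE invt -ltnNge => lt.
  split; first exact: ltnW.
  rewrite (ltnW lt) andbT; apply/eqP=> E.
  by move: lt; rewrite -E ltnn.
have CS : ~: S = tau @: (S :\: F).
  apply/setP=> t; rewrite inE; apply/idP/imsetP.
  - move=> nt; exists (tau t); first by case: (notS t nt).
    by rewrite invt.
  - case=> u; rewrite !inE => /andP[nF uS] ->.
    rewrite -ltnNge invt ltn_neqAle uS andbT.
    apply: contra nF => /eqP E.
    by apply/eqP; apply: enum_rank_inj; apply/val_inj.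
have cardC : #|~: S| = #|S :\: F|.
  by rewrite CS card_imset //; apply: inv_inj.
exists #|S|; split.
  rewrite -(cardsC S) cardC -(cardsID F S) (setIidPr FS).
  rewrite -/F; lia.
exists (fun i => rep (enum_val i)); split.
- move=> i j; rewrite relE !keyrep => -[E|E].
    exact: enum_val_inj.
  have := enum_valP i; have := enum_valP j; rewrite !inE => hj hi.
  apply: enum_val_inj; apply: enum_rank_inj; apply/val_inj/eqP.
  rewrite eqn_leq; apply/andP; split.
    by move: hi; rewrite E invt.
  by move: hj; rewrite -E.
- move=> x.
  have [xS|xS] := boolP (key x \in S).
    exists (enum_rank_in xS (key x)).
    by rewrite relE keyrep enum_rankK_in //; left.
  have [tS _] := notS _ xS.
  exists (enum_rank_in tS (tau (key x))).
  by rewrite relE keyrep enum_rankK_in // invt; right.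
Qed.

Definition mx3 (R : nzRingType) (a b c d e f g h k : R) : 'M[R]_3 :=
  \matrix_(i < 3, j < 3) nth 0 (nth [::] [:: [:: a; b; c]; [:: d; e; f]; [:: g; h; k]] i) j.

Ltac ent := apply/matrixP; case => [[|[|[|//]]] ?]; case => [[|[|[|//]]] ?];
  rewrite !(mxE, big_ord_recl, big_ord0) /=.

Definition Ai : 'M[int]_3 := mx3 1 (-1) 0 0 (-1) 0 0 0 (-1).
Definition Em (b p q t : int) : 'M[int]_3 := mx3 (-1) b p 0 (2 * b - 1) (2 * p) 0 t q.

Lemma AiAi : Ai *m Ai = 1.
Proof. rewrite /Ai; ent; ring. Qed.

Lemma Ai_comm b p q t : Ai *m (1 - Em b p q t) = (1 - Em b p q t) *m Ai.
Proof. rewrite /Ai /Em; ent; ring. Qed.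

Section CV.
Variable R : comNzRingType.
Lemma cv3_eta (v : 'cV[R]_3) : v = cv3 (v 0 0) (v 1 0) (v 2 0).
Proof. by ent; congr (v _ _); apply/val_inj. Qed.
Lemma cv3D (a b c a' b' c' : R) : cv3 a b c + cv3 a' b' c' = cv3 (a + a') (b + b') (c + c').
Proof. by ent. Qed.
Lemma cv3N (a b c : R) : - cv3 a b c = cv3 (- a) (- b) (- c).
Proof. by ent. Qed.
Lemma cv3B (a b c a' b' c' : R) : cv3 a b c - cv3 a' b' c' = cv3 (a - a') (b - b') (c - c').
Proof. by ent. Qed.
Lemma cv3_inj (a b c a' b' c' : R) : cv3 a b c = cv3 a' b' c' -> [/\ a = a', b = b' & c = c'].
Proof. by move/matrixP=> E; have := E 0 0; have := E 1 0; have := E 2 0; rewrite !mxE. Qed.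
Lemma mx3_cv3 (a b c d e f g h k x y z : R) :
  mx3 a b c d e f g h k *m cv3 x y z = cv3 (a * x + b * y + c * z) (d * x + e * y + f * z) (g * x + h * y + k * z).
Proof. by ent; ring. Qed.
Lemma mx3_1 : (1 : 'M[R]_3) = mx3 1 0 0 0 1 0 0 0 1.
Proof. by ent. Qed.
Lemma mx3B (a b c d e f g h k a' b' c' d' e' f' g' h' k' : R) :
  mx3 a b c d e f g h k - mx3 a' b' c' d' e' f' g' h' k' =
  mx3 (a - a') (b - b') (c - c') (d - d') (e - e') (f - f') (g - g') (h - h') (k - k').
Proof. by ent. Qed.
Lemma det_mx3 (a b c d e f g h k : R) : \det (mx3 a b c d e f g h k) =
  a * (e * k - f * h) - b * (d * k - f * g) + c * (d * h - e * g).
Proof. by rewrite det3 !mxE. Qed.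
End CV.

Lemma Mform b p q t : 1 - Em b p q t = mx3 2 (-b) (-p) 0 (2 - 2 * b) (- (2 * p)) 0 (-t) (1 - q).
Proof. by rewrite /Em mx3_1 mx3B; congr mx3; ring. Qed.

Lemma AiB1 : Ai - 1 = mx3 0 (-1) 0 0 (-2) 0 0 0 (-2).
Proof. by rewrite /Ai mx3_1 mx3B; congr mx3; ring. Qed.

Definition Pm b p t k : 'M[int]_3 := mx3 1 0 0 0 (2 - 2 * b) (-p) 0 (-t) (-k).

Lemma latt b p q t k (v w : 'cV[int]_3) : q = 2 * k + 1 ->
  (Ai - 1) *m v = (1 - Em b p q t) *m w -> exists x, v = Pm b p t k *m x.
Proof.
move=> hq; rewrite (cv3_eta v) (cv3_eta w).
move: (v 0 0) (v 1 0) (v 2 0) (w 0 0) (w 1 0) (w 2 0) => v0 v1 v2 w0 w1 w2.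
rewrite AiB1 Mform !mx3_cv3 => /cv3_inj [h0 h1 h2].
exists (cv3 v0 (-w0) (-w2)); rewrite /Pm mx3_cv3; congr cv3.
- ring.
- nia.
- nia.
Qed.

Lemma latt' b p q t k (x : 'cV[int]_3) : q = 2 * k + 1 ->
  (Ai - 1) *m (Pm b p t k *m x) = (1 - Em b p q t) *m cv3 (- x 1 0) (-2 * x 1 0) (- x 2 0).
Proof.
move=> hq; rewrite (cv3_eta x); move: (x 0 0) (x 1 0) (x 2 0) => x0 x1 x2.
rewrite !mxE /=.
rewrite AiB1 Mform /Pm !mx3_cv3; congr cv3; rewrite ?hq; ring.
Qed.

Definition relc (M : 'M[int]_3) (e : 'cV[int]_3) (z z' : 'cV[int]_3) : Prop :=
  exists w, exists beta : bool,
    z = (if beta then Ai *m z' else z') + M *m w - (if beta then e else 0).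

Lemma Pinj (P : 'M[int]_3) (x y : 'cV[int]_3) : \det P != 0 -> P *m x = P *m y -> x = y.
Proof.
move=> dP E; apply/eqP; rewrite -subr_eq0.
have : \adj P *m P *m (x - y) = 0 by rewrite -mulmxA mulmxBr E subrr mulmx0.
by rewrite mul_adj_mx mul_scalar_mx => /eqP; rewrite scalemx_eq0 (negbTE dP) /=.
Qed.

Lemma core b p q t k e1 e3 : q = 2 * k + 1 -> \det (1 - Em b p q t) != 0 ->
  exists n, (2 * n = `|\det (1 - Em b p q t)| + (if (2 %| e3)%Z then 4 else 0))%N /\
  exists f : 'I_n -> 'cV[int]_3,
    (forall i j, relc (1 - Em b p q t) (cv3 e1 (2 * e1) e3) (f i) (f j) -> i = j) /\
    (forall z, exists i, relc (1 - Em b p q t) (cv3 e1 (2 * e1) e3) z (f i)).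
Proof.
move=> hq dM.
set M := 1 - Em b p q t in dM *.
set e := cv3 e1 (2 * e1) e3.
have [T [key [rep [cardT keyE keyrep]]]] := coker_fin dM.
have AM : Ai *m M = M *m Ai by exact: Ai_comm.
have Ae : Ai *m e = - e by rewrite /Ai /e mx3_cv3 cv3N; congr cv3; ring.
pose tau t0 := key (Ai *m rep t0 - e).
have tauE z : tau (key z) = key (Ai *m z - e).
  have [w Ew] := (keyE (rep (key z)) z).1 (keyrep _).
  apply/keyE; exists (Ai *m w).
  rewrite mulmxA -AM -mulmxA -Ew mulmxBr.
  by apply/matrixP=> i j; rewrite !mxE; ring.
have invt : involutive tau.
  move=> t0; rewrite [tau t0]/tau tauE mulmxBr mulmxA AiAi mul1mx Ae opprK addrK.
  exact: keyrep.
have relE z z' : relc M e z z' <-> key z = key z' \/ key z = tau (key z').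
  rewrite tauE; split.
  - case=> w [[] ->] /=.
    + right; apply/keyE; exists w.
      by apply/matrixP=> i j; rewrite !mxE; ring.
    + left; apply/keyE; exists w.
      by apply/matrixP=> i j; rewrite !mxE; ring.
  - case=> /keyE [w Ew].
    + exists w, false => /=; rewrite -Ew.
      by apply/matrixP=> i j; rewrite !mxE; ring.
    + exists w, true => /=; rewrite -Ew.
      by apply/matrixP=> i j; rewrite !mxE; ring.
have [n [hn [f [fd fc]]]] := orbit_count invt keyrep relE.
exists n; split; last by exists f.
rewrite hn cardT; congr (_ + _)%N.
have fixP z : tau (key z) = key z <-> exists w, (Ai - 1) *m z - e = M *m w.
  rewrite tauE keyE; split => -[w Ew]; exists w; rewrite -Ew mulmxBl mul1mx;
  by apply/matrixP=> i j; rewrite !mxE; ring.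
case: (boolP (2 %| e3)%Z) => he.
- move/dvdzP: he => [k3 he3].
  pose z0v := cv3 0 (- e1) (- k3).
  have Az0 : (Ai - 1) *m z0v = e by rewrite AiB1 /e mx3_cv3 he3; congr cv3; ring.
  pose P := Pm b p t k.
  pose Q : 'M[int]_3 := mx3 2 (-b) (-p) 0 1 0 0 0 2.
  have MPQ : M = P *m Q by rewrite /M Mform /P /Pm /Q; ent; rewrite ?hq; ring.
  have dQ : \det Q = 4 by rewrite det_mx3; ring.
  have dP : \det P != 0.
    by move: dM; rewrite MPQ det_mulmx dQ; apply: contra => /eqP ->; rewrite mul0r.
  have dQ0 : \det Q != 0 by rewrite dQ.
  have [TQ [keyQ [repQ [cardTQ keyQE keyQrep]]]] := coker_fin dQ0.
  pose g u := key (z0v + P *m repQ u).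
  have ginj : injective g.
    move=> u u' /keyE [w Ew]; rewrite -(keyQrep u) -(keyQrep u'); apply/keyQE.
    exists w; apply: (Pinj dP); rewrite mulmxBr mulmxA -MPQ -Ew.
    by apply/matrixP=> i j; rewrite !mxE; ring.
  rewrite (_ : [set t0 | tau t0 == t0] = g @: [set: TQ]); last first.
    apply/setP => t0; rewrite inE; apply/eqP/imsetP.
    - move=> fx; have : tau (key (rep t0)) = key (rep t0) by rewrite keyrep.
      case/fixP => w Ew.
      have : (Ai - 1) *m (rep t0 - z0v) = M *m w.
        by rewrite mulmxBr Az0 -Ew.
      case/(latt hq) => x hx.
      exists (keyQ x); first by rewrite inE.
      rewrite /g -{1}(keyrep t0); apply/keyE.
      have [w' Ew'] := (keyQE (repQ (keyQ x)) x).1 (keyQrep _).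
      exists (- w'); rewrite mulmxN MPQ -mulmxA -Ew' mulmxBr -hx.
      by apply/matrixP=> i j; rewrite !mxE; ring.
    - case=> u _ ->; rewrite /g; apply/fixP.
      exists (cv3 (- (repQ u) 1 0) (-2 * (repQ u) 1 0) (- (repQ u) 2 0)).
      rewrite -(@latt' b p q t k (repQ u) hq) mulmxDr Az0.
      by apply/matrixP=> i j; rewrite !mxE; ring.
  by rewrite card_imset // cardsT cardTQ dQ.
- apply/eqP; rewrite cards_eq0; apply/eqP/setP=> t0; rewrite !inE.
  apply/negbTE/eqP; rewrite -(keyrep t0) => /fixP [w].
  rewrite (cv3_eta w) (cv3_eta (rep t0)).
  move: (w 0 0) (w 1 0) (w 2 0) (rep t0 0 0) (rep t0 1 0) (rep t0 2 0) => w0 w1 w2 z0 z1 z2.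
  rewrite AiB1 /M Mform /e !mx3_cv3 cv3B => /cv3_inj [h0 h1 h2].
  move: he; have -> : e3 = 2 * (t * w0 + k * w2 - z2) by nia.
  by rewrite dvdz_mulr.
Qed.

Lemma mx3_eta (A : 'M[int]_3) : A = mx3 (A 0 0) (A 0 1) (A 0 2) (A 1 0) (A 1 1) (A 1 2) (A 2 0) (A 2 1) (A 2 2).
Proof. by ent; congr (A _ _); apply/val_inj. Qed.

Lemma mx3M (a b c d e f g h k a' b' c' d' e' f' g' h' k' : int) :
  mx3 a b c d e f g h k *m mx3 a' b' c' d' e' f' g' h' k' =
  mx3 (a * a' + b * d' + c * g') (a * b' + b * e' + c * h') (a * c' + b * f' + c * k')
      (d * a' + e * d' + f * g') (d * b' + e * e' + f * h') (d * c' + e * f' + f * k')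
      (g * a' + h * d' + k * g') (g * b' + h * e' + k * h') (g * c' + h * f' + k * k').
Proof. by ent; ring. Qed.

Lemma mx3_inj (a b c d e f g h k a' b' c' d' e' f' g' h' k' : int) :
  mx3 a b c d e f g h k = mx3 a' b' c' d' e' f' g' h' k' ->
  [/\ a = a', b = b', c = c', d = d' & [/\ e = e', f = f', g = g', h = h' & k = k']].
Proof.
move/matrixP=> E.
have := E 0 0; have := E 0 1; have := E 0 2; have := E 1 0; have := E 1 1;
have := E 1 2; have := E 2 0; have := E 2 1; have := E 2 2; rewrite !mxE /=.
by move=> -> -> -> -> -> -> -> -> ->.
Qed.

Lemma int_struct (Di Ei : 'M[int]_3) : Di *m Ai = Ai *m Di -> Di *m Ei = 1 ->
  \det (1 - Di) != 0 -> exists b p q t k, Di = Em b p q t /\ q = 2 * k + 1.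
Proof.
move=> hc hu hd.
have hdet : \det Di * \det Ei = 1 by rewrite -det_mulmx hu det1.
move: hc hdet hd; rewrite (mx3_eta Di).
move: (Di 0 0) (Di 0 1) (Di 0 2) (Di 1 0) (Di 1 1) (Di 1 2) (Di 2 0) (Di 2 1) (Di 2 2)
  => a b p x10 x11 x12 x20 t q.
rewrite /Ai !mx3M => /mx3_inj [h00 h01 h02 h10 [h11 h12 h20 h21 h22]].
have e10 : x10 = 0 by lia.
have e20 : x20 = 0 by lia.
have e11 : x11 = 2 * b + a by lia.
have e12 : x12 = 2 * p by lia.
subst x10 x20 x11 x12.
rewrite det_mx3 mx3_1 mx3B det_mx3.
set X := (2 * b + a) * q - 2 * p * t.
move=> hdet hd.
have hdet' : a * (X * \det Ei) = 1 by rewrite -hdet /X; ring.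
have hdet'' : X * (a * \det Ei) = 1 by rewrite -hdet /X; ring.
have ua : a \is a GRing.unit by apply/unitrPr; exists (X * \det Ei).
have uX : X \is a GRing.unit by apply/unitrPr; exists (a * \det Ei).
have ua' : (a == 1) || (a == -1) by [].
have uX' : (X == 1) || (X == -1) by [].
case/orP: ua' => /eqP ha.
  by move: hd; rewrite ha; set Y := (X in X != 0); have -> : Y = 0 by rewrite /Y; ring.
subst a.
case/orP: uX' => /eqP hX.
- exists b, p, q, t, (b * q - p * t - 1); split.
    by rewrite /Em; congr mx3; ring.
  by move: hX; rewrite /X => hX; lia.
- exists b, p, q, t, (b * q - p * t); split.
    by rewrite /Em; congr mx3; ring.
  by move: hX; rewrite /X => hX; lia.
Qed.

Lemma AEm b p q t : Ai *m Em b p q t = Em (1 - b) (- p) (- q) (- t).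
Proof. by rewrite /Ai /Em mx3M; congr mx3; ring. Qed.

Section RealPart.
Variable R : realType.
Notation toR := (map_mx (intmul (1 : R))).

Lemma toRM (A : 'M[int]_3) (B : 'cV[int]_3) : toR (A *m B) = toR A *m toR B.
Proof. exact: map_mxM. Qed.
Lemma toRdet (A : 'M[int]_3) : \det (toR A) = (\det A)%:~R.
Proof. exact: det_map_mx. Qed.
Lemma toR_inj m n : injective (map_mx (intmul (1 : R)) : 'M_(m, n) -> 'M_(m, n)).
Proof.
move=> A B /matrixP E; apply/matrixP => i j; have := E i j; rewrite !mxE.
by move/eqP; rewrite eqr_int => /eqP.
Qed.

Lemma int_vecP (z : 'cV[R]_3) : int_vec z <-> exists zi, z = toR zi.
Proof.
split.
  move=> h; exists (map_mx Num.floor z); apply/matrixP => i j.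
  by rewrite !mxE (ord1 j) floorK.
by case=> zi -> i; rewrite mxE; exact: intr_int.
Qed.

Lemma AmatE : Amat R = toR Ai.
Proof. rewrite /Amat /Ai; ent. all: by []. Qed.

Lemma AR2 : Amat R *m Amat R = 1.
Proof. by rewrite AmatE -map_mxM AiAi map_mx1. Qed.

Lemma AR_unit : Amat R \in unitmx.
Proof. by case: (mulmx1_unit AR2). Qed.

Lemma invAR : invmx (Amat R) = Amat R.
Proof.
by rewrite -[RHS]mul1mx -(mulVmx AR_unit) -mulmxA AR2 mulmx1.
Qed.

Lemma AR_neq1 : Amat R != 1.
Proof.
apply/eqP => /matrixP /(_ 1 1); rewrite /Amat !mxE /=.
lra.
Qed.

Lemma GammaP (g : aff R) : in_Gamma g <->
  (exists zi, g.1 = toR zi) /\ (g.2 = 1%:M \/ g.2 = Amat R).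
Proof.
split.
- elim => [z hz | | x y _ [[xi ex] hx] _ [[yi ey] hy] | x _ [[xi ex] hx]].
  + by split; [apply/int_vecP | left].
  + by split; [exists 0; rewrite map_mx0 | right].
  + rewrite /aff_mul /=; split.
      case: hx => ->; [exists (xi + yi) | exists (xi + Ai *m yi)];
      by rewrite map_mxD ?map_mxM -?AmatE ex ey ?mul1mx.
    case: hx hy => -> [] ->; rewrite ?mul1mx ?mulmx1 ?AR2; by [left|right].
  + rewrite /aff_inv /=; case: hx => ->; rewrite ?invmx1 ?invAR.
      split; [exists (- xi) | by left]; by rewrite mul1mx ex map_mxN.
    split; [exists (- (Ai *m xi)) | by right]; by rewrite map_mxN map_mxM -AmatE ex.
- case: g => z B /= [[zi ->] [] ->].
  + by apply: Gamma_trans; apply/int_vecP; exists zi.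
  + have -> : (toR zi, Amat R) = aff_mul (toR zi, 1%:M) (0, Amat R).
      by rewrite /aff_mul /= mulmx0 addr0 mul1mx.
    apply: Gamma_mul; last exact: (@Gamma_A R).
    by apply: Gamma_trans; apply/int_vecP; exists zi.
Qed.

Lemma sep_core (u X c : R) : 1 <= `|u| -> c = u * X -> `|X| <= `|c|.
Proof. move=> hu ->; rewrite normrM; have := normr_ge0 X; nra. Qed.

Lemma nat_dist (i k : nat) : i != k -> 1 <= `|k%:R - i%:R : R|.
Proof.
case: (ltngtP i k) => // h _.
- have : (i + 1)%:R <= k%:R :> R by rewrite ler_nat addn1.
  rewrite natrD => h'; rewrite ger0_norm; lra.
- have : (k + 1)%:R <= i%:R :> R by rewrite ler_nat addn1.
  rewrite natrD => h'; rewrite ler0_norm; lra.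
Qed.

Lemma sep1 (i k : nat) (X c : R) : `|c| < `|X| -> i%:R * X = k%:R * X - c -> i = k.
Proof.
move=> hc E; apply/eqP; apply: contraLR hc => ne; rewrite -leNgt.
apply: (sep_core (nat_dist ne)).
by rewrite mulrBl E; ring.
Qed.

Lemma sep2 (i k : nat) (X c : R) : `|c| < `|X| -> i%:R * X = - (k%:R * X) - c -> i = k.
Proof.
move=> hc E.
case: (eqVneq (i + k)%N 0%N) => [/eqP|] h.
  by rewrite addn_eq0 in h; case/andP: h => /eqP -> /eqP ->.
exfalso; move: hc; apply/negP; rewrite -leNgt.
apply: (@sep_core (- (i + k)%:R)).
  rewrite normrN ger0_norm // (_ : 1 = 1%:R) // ler_nat; lia.
by rewrite natrD; lra.
Qed.

Section Xi.
Variables (d : 'cV[R]_3) (D : 'M[R]_3).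
Hypotheses (hD : D \in unitmx) (hDA : D *m Amat R = Amat R *m D).

Definition isB (B : 'M[R]_3) := B = 1%:M \/ B = Amat R.

Lemma conjB B : isB B -> D *m B *m invmx D = B.
Proof.
case=> ->; first by rewrite mulmx1 mulmxV.
by rewrite hDA -mulmxA mulmxV // mulmx1.
Qed.

Lemma invB B : isB B -> invmx B = B.
Proof. by case=> ->; rewrite ?invmx1 ?invAR. Qed.

Lemma BBB B B2 : isB B -> isB B2 -> B *m B2 *m B = B2.
Proof.
by case=> -> [] ->; rewrite ?mul1mx ?mulmx1 ?AR2 ?mul1mx.
Qed.

Lemma xiE w B : isB B -> xi (d, D) (w, B) = (D *m w + (1 - B) *m d, B).
Proof.
move=> hB; rewrite /xi /aff_mul /aff_inv /= conjB //; congr pair.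
rewrite mulmxN mulmxA conjB // mulmxBl mul1mx.
by apply/matrixP=> i j; rewrite !mxE; ring.
Qed.

Lemma twF w B z' B2 : isB B -> isB B2 ->
  aff_mul (aff_mul (w, B) (z', B2)) (aff_inv (xi (d, D) (w, B))) =
  (w + B *m z' - B2 *m (D *m w + (1 - B) *m d), B2).
Proof.
move=> hB hB2; rewrite xiE // /aff_mul /aff_inv /= invB // BBB //; congr pair.
by rewrite mulmxN !mulmxA BBB.
Qed.

Lemma twP z B1 z' B2 : isB B2 ->
  tw_conj (d, D) (z, B1) (z', B2) <-> B1 = B2 /\ exists w B, (exists wi, w = toR wi) /\
    isB B /\ z = w + B *m z' - B2 *m (D *m w + (1 - B) *m d).
Proof.
move=> hB2; rewrite /tw_conj; split.
- case=> [[w B]] [/GammaP [[wi /= ew] hB] E].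
  rewrite twF // in E; case: E => -> ->; split => //.
  by exists w, B; split; [exists wi | split].
- case=> -> [w [B [[wi ew] [hB ->]]]].
  exists (w, B); split; last by rewrite twF.
  by apply/GammaP; split; [exists wi | ].
Qed.

Lemma expr_eq (Di : 'M[int]_3) (ci wi z' : 'cV[int]_3) (Bi : 'M[int]_3) (beta : bool) :
  D = toR Di -> (1 - Amat R) *m d = toR ci ->
  toR wi + (if beta then Amat R else 1%:M) *m toR z'
    - toR Bi *m (D *m toR wi + (1 - (if beta then Amat R else 1%:M)) *m d) =
  toR ((if beta then Ai *m z' else z') + (1 - Bi *m Di) *m wi - (if beta then Bi *m ci else 0)).
Proof.
move=> eD ec; case: beta; rewrite ?ec ?subrr ?mul0mx ?addr0 ?mul1mx;
rewrite !(map_mxD, map_mxB, map_mxM, map_mx1, map_mx0, map_mxN) -eD -?AmatE;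
rewrite ?mulmxBl ?mulmxDr ?mulmxBr ?mul1mx ?mulmx1 !mulmxA ?subr0;
by apply/matrixP=> i j; rewrite !mxE; ring.
Qed.

Lemma relP (Di : 'M[int]_3) (ci : 'cV[int]_3) (Bi : 'M[int]_3) :
  D = toR Di -> (1 - Amat R) *m d = toR ci -> (Bi = 1 \/ Bi = Ai) ->
  forall z z', tw_conj (d, D) (toR z, toR Bi) (toR z', toR Bi) <->
               relc (1 - Bi *m Di) (Bi *m ci) z z'.
Proof.
move=> eD ec hBi z z'.
have hB2 : isB (toR Bi) by case: hBi => ->; [left; rewrite map_mx1 | right; rewrite AmatE].
rewrite twP //; split.
- case=> _ [w [B [[wi ->] [hB E]]]].
  exists wi; case: hB => EB; [exists false | exists true]; apply: toR_inj;
  rewrite E EB ?ec ?subrr ?mul0mx ?addr0 ?mul1mx;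
  rewrite !(map_mxD, map_mxB, map_mxM, map_mx1, map_mx0, map_mxN) -eD -?AmatE;
  rewrite ?mulmxBl ?mulmxDr ?mulmxBr ?mul1mx ?mulmx1 !mulmxA ?subr0;
  by apply/matrixP=> i j; rewrite !mxE; ring.
- case=> w [beta hz]; split => //.
  exists (toR w), (if beta then Amat R else 1%:M); split; first by exists w.
  case: beta hz => /= hz; (split; [by [right | left] | ]); rewrite hz;
  rewrite ?ec ?subrr ?mul0mx ?addr0 ?mul1mx;
  rewrite !(map_mxD, map_mxB, map_mxM, map_mx1, map_mx0, map_mxN) -eD -?AmatE;
  rewrite ?mulmxBl ?mulmxDr ?mulmxBr ?mul1mx ?mulmx1 !mulmxA ?subr0;
  by apply/matrixP=> i j; rewrite !mxE; ring.
Qed.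

Lemma comm_AR_B B : isB B -> B *m Amat R = Amat R *m B.
Proof. by case=> ->; rewrite ?mul1mx ?mulmx1. Qed.

Lemma mu_exists B2 : isB B2 -> \det (1 - B2 *m D) = 0 ->
  exists mu : 'rV[R]_3, [/\ mu != 0, mu *m (1 - B2 *m D) = 0 &
     (mu *m Amat R = mu \/ mu *m Amat R = - mu)].
Proof.
move=> hB2 /eqP /det0P [l lnz lE].
have cA : Amat R *m (1 - B2 *m D) = (1 - B2 *m D) *m Amat R.
  rewrite mulmxBr mulmxBl mulmx1 mul1mx mulmxA -comm_AR_B // -!mulmxA.
  by rewrite hDA.
have lAE : (l *m Amat R) *m (1 - B2 *m D) = 0.
  by rewrite -mulmxA cA mulmxA lE mul0mx.
case: (eqVneq (l + l *m Amat R) 0) => h.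
- exists l; split => //; right.
  by apply/eqP; rewrite -subr_eq0 opprK addrC h.
- exists (l + l *m Amat R); split => //.
    by rewrite mulmxDl lE lAE addr0.
  by left; rewrite mulmxDl -mulmxA AR2 mulmx1 addrC.
Qed.

Lemma mu_expand (mu : 'rV[R]_3) B B2 (w z' c : 'cV[R]_3) :
  mu *m (w + B *m z' - B2 *m (D *m w + c)) =
  mu *m (1 - B2 *m D) *m w + mu *m B *m z' - mu *m B2 *m c.
Proof.
rewrite !(mulmxDr, mulmxBr, mulmxBl, mulmxDl, mulmxN, mulNmx) ?mulmx1 !mulmxA.
by apply/matrixP=> i j; rewrite !mxE; ring.
Qed.

Lemma infinite_case B2 : isB B2 -> \det (1 - B2 *m D) = 0 ->
  infinitely_many_classes (d, D).
Proof.
move=> hB2 h0.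
have [mu [munz muE muA]] := mu_exists hB2 h0.
have [j mj] : exists j, mu 0 j != 0.
  case: (pickP (fun j => mu 0 j != 0)) => [j hj | h]; first by exists j.
  exfalso; move/eqP: munz; apply; apply/matrixP => i j'.
  by rewrite (ord1 i) mxE; move/negbFE/eqP: (h j').
set kap := (mu *m B2 *m ((1 - Amat R) *m d)) 0 0.
set m := mu 0 j.
pose K := Num.bound (`|kap| / `|m|).
have hK : `|kap| < `|K%:R * m|.
  have := archi_boundP (divr_ge0 (normr_ge0 kap) (normr_ge0 m)).
  by rewrite normrM ger0_norm // ltr_pdivrMr ?normr_gt0.
have hK0 : `|0 : R| < `|K%:R * m| by rewrite normr0; exact: le_lt_trans (normr_ge0 kap) hK.
move=> n.
pose zi (k : 'I_n) : 'cV[int]_3 := ((k * K)%N%:Z) *: delta_mx j 0.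
have muz (l : 'I_n) : (mu *m toR (zi l)) 0 0 = l%:R * (K%:R * m).
  rewrite /zi map_mxZ map_delta_mx -scalemxAr mxE -colE mxE mulrA -natrM.
  by [].
exists (fun k => (toR (zi k), B2)); split.
  by move=> k; apply/GammaP; split; [exists (zi k) | ].
move=> i k /(twP _ _ _ hB2) [_ [w [B [_ [hB E]]]]].
have := congr1 (fun v => (mu *m v) 0 0) E.
rewrite /= mu_expand muE mul0mx muz.
have entryB (A1 A2 : 'M[R]_1) : (A1 - A2) 0 0 = A1 0 0 - A2 0 0 by rewrite !mxE.
case: hB => EB; subst B.
  rewrite add0r subrr mul0mx mulmx0 subr0 mulmx1 muz.
  by move=> h; apply/val_inj; apply: (sep1 hK0); rewrite subr0.
rewrite add0r entryB -/kap.
case: muA => ->; first by rewrite muz => /(sep1 hK) /val_inj.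
rewrite mulNmx mxE muz => /(sep2 hK) /val_inj; done.
Qed.
End Xi.

Lemma xi_gen (d : 'cV[R]_3) D w B :
  xi (d, D) (w, B) = (d + D *m w - D *m B *m invmx D *m d, D *m B *m invmx D).
Proof. by rewrite /xi /aff_mul /aff_inv /=; congr pair; rewrite mulmxN !mulmxA. Qed.

Lemma toR_delta (j : 'I_3) : delta_mx j 0 = toR (delta_mx j 0) :> 'cV[R]_3.
Proof. by rewrite map_delta_mx. Qed.

Lemma entry_delta (A : 'M[R]_3) i (j : 'I_3) : (A *m (delta_mx j 0 : 'cV[R]_3)) i 0 = A i j.
Proof. by rewrite -colE mxE. Qed.


Section Struct.
Variables (d : 'cV[R]_3) (D : 'M[R]_3).
Hypothesis H : xi_aut_Gamma (d, D).

Lemma hD : D \in unitmx. Proof. by case: H. Qed.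

Lemma DAR_c : D *m Amat R = Amat R *m D /\ exists ci, (1 - Amat R) *m d = toR ci.
Proof.
case: H => hD [img _].
have := img (0, Amat R) (@Gamma_A R); rewrite xi_gen => /GammaP [/= [ci eci] [E | E]].
  exfalso; move/eqP: AR_neq1; apply.
  have : invmx D *m (D *m Amat R *m invmx D) *m D = Amat R.
    by rewrite !mulmxA mulVmx // mul1mx -mulmxA mulVmx // mulmx1.
  by rewrite E mulmx1 mulVmx // => <-.
split.
  have := congr1 (mulmx^~ D) E; rewrite /= -!mulmxA mulVmx // mulmx1 => ->.
  by [].
exists ci; rewrite -eci E mulmx0 addr0 mulmxBl mul1mx.
by [].
Qed.

Lemma Dint : exists Di, D = toR Di.
Proof.
case: H => hD [img _].
suff hij : forall i j, D i j \is a Num.int.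
  exists (map_mx Num.floor D); apply/matrixP => i j.
  by rewrite !mxE floorK.
move=> i j.
have : in_Gamma (delta_mx j 0 : 'cV[R]_3, 1%:M).
  by apply/GammaP; split; [exists (delta_mx j 0); rewrite toR_delta | left].
move/img; rewrite xi_gen mulmx1 mulmxV // mul1mx addrAC subrr add0r.
case/GammaP => [/= [vi evi] _].
by rewrite -entry_delta evi mxE intr_int.
Qed.

Lemma Dinvint : exists Ei, invmx D = toR Ei.
Proof.
case: H => hD [_ surj].
suff hij : forall i j, invmx D i j \is a Num.int.
  exists (map_mx Num.floor (invmx D)); apply/matrixP => i j.
  by rewrite !mxE floorK.
move=> i j.
have : in_Gamma (delta_mx j 0 : 'cV[R]_3, 1%:M).
  by apply/GammaP; split; [exists (delta_mx j 0); rewrite toR_delta | left].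
case/surj => [[w B]] [/GammaP [/= [wi ewi] hB]].
rewrite xi_gen => -[E1 E2].
case: hB => EB; last first.
  exfalso; move/eqP: AR_neq1; apply.
  have : invmx D *m (D *m Amat R *m invmx D) *m D = Amat R.
    by rewrite !mulmxA mulVmx // mul1mx -mulmxA mulVmx // mulmx1.
  by rewrite -EB E2 mulmx1 mulVmx // => <-.
move: E1; rewrite EB mulmx1 mulmxV // mul1mx addrAC subrr add0r => E1.
have -> : invmx D i j = (invmx D *m (D *m w)) i 0 by rewrite E1 entry_delta.
by rewrite mulKmx // ewi mxE intr_int.
Qed.
End Struct.
End RealPart.

Section Main.
Variable R : realType.
Notation toR := (map_mx (intmul (1 : R))).

Lemma main_R (d : 'cV[R]_3) (D : 'M[R]_3) :
  xi_aut_Gamma (d, D) ->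
  let delta : R := if third_comp d \is a Num.int then 1 else 0 in
  reidemeister_eq (d, D)
    ((2^-1)%:E * (\sum_(A <- holF R) abs_inf (\det (1%:M - A *m D)))
       + (4 * delta)%:E)%E.
Proof.
move=> H delta.
have hD := hD H.
have [hDA [ci eci]] := DAR_c H.
rewrite /holF big_cons big_cons big_nil mul1mx.
have hinf B2 : isB B2 -> \det (1 - B2 *m D) = 0 ->
   reidemeister_eq (d, D) ((2^-1)%:E * (abs_inf (\det (1%:M - D)) +
       (abs_inf (\det (1%:M - Amat R *m D)) + 0)) + (4 * delta)%:E)%E.
  move=> hB2 h0.
  have -> : (abs_inf (\det (1%:M - D)) + (abs_inf (\det (1%:M - Amat R *m D)) + 0))%E = +oo%E.
    case: hB2 h0 => -> h0; rewrite ?mul1mx in h0.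
      have h0' : \det (1%:M - D) = 0 := h0.
      by rewrite /abs_inf h0' eqxx addye //; case: ifP.
    have h0' : \det (1%:M - Amat R *m D) = 0 := h0.
    by rewrite /abs_inf h0' eqxx adde0 addey //; case: ifP.
  by rewrite gt0_muley ?lte_fin ?invr_gt0 // addye //; apply: (infinite_case d hD hDA hB2 h0).
case: (eqVneq (\det (1%:M - D)) 0) => h1.
  by apply: (hinf 1%:M); [left | rewrite mul1mx].
case: (eqVneq (\det (1%:M - Amat R *m D)) 0) => h2.
  by apply: (hinf (Amat R)); [right | ].
have [Di eDi] := Dint H.
have [Ei eEi] := Dinvint H.
have DAi : Di *m Ai = Ai *m Di.
  by apply: (@toR_inj R); rewrite !map_mxM -eDi -AmatE.
have DEi : Di *m Ei = 1.
  by apply: (@toR_inj R); rewrite map_mxM -eDi -eEi mulmxV // map_mx1.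
have det1E : \det (1%:M - D) = (\det (1 - Di))%:~R.
  by rewrite eDi -(map_mx1 (intmul (1 : R))) -map_mxB det_map_mx.
have det2E : \det (1%:M - Amat R *m D) = (\det (1 - Ai *m Di))%:~R.
  by rewrite eDi AmatE -map_mxM -(map_mx1 (intmul (1 : R))) -map_mxB det_map_mx.
have hd1 : \det (1 - Di) != 0 by move: h1; rewrite det1E intr_eq0.
have hd2 : \det (1 - Ai *m Di) != 0 by move: h2; rewrite det2E intr_eq0.
have [b [p [q [t [k [EDi hq]]]]]] := int_struct DAi DEi hd1.
have e1A : 1 - Amat R = mx3 0 1 0 0 2 0 0 0 2.
  by rewrite /Amat mx3_1; ent; rewrite ?subrr ?subr0 //; lra.
have ec := eci; rewrite e1A (cv3_eta d) (cv3_eta ci) mx3_cv3 in ec.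
have toR_cv3 (x y z : int) : toR (cv3 x y z) = cv3 x%:~R y%:~R z%:~R by ent.
rewrite toR_cv3 in ec; case/cv3_inj: ec => ec0 ec1 ec2.
set c0 := ci 0 0 in ec0 ec1 ec2 *; set c1 := ci 1 0 in ec1; set c2 := ci 2 0 in ec2.
have hc1 : c1 = 2 * c0.
  by apply/eqP; rewrite -(eqr_int R) intrM -ec0 -ec1; apply/eqP; lra.
have eci' : ci = cv3 c0 (2 * c0) c2 by rewrite (cv3_eta ci) -/c0 -/c1 -/c2 hc1.
have hdelta : (third_comp d \is a Num.int) = (2 %| c2)%Z.
  have -> : third_comp d = d 2 0 by rewrite /third_comp; congr (d _ _); apply: val_inj.
  apply/idP/idP.
  - case/intrP => m hm; apply/dvdzP; exists m; apply/eqP.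
    by rewrite -(eqr_int R) intrM -ec2 hm; apply/eqP; lra.
  - case/dvdzP => m hm; apply/intrP; exists m.
    by move: ec2; rewrite hm intrM; lra.
have hdM1 : \det (1 - Em b p q t) != 0 by rewrite -EDi.
have hq2 : - q = 2 * (- k - 1) + 1 by rewrite hq; ring.
have hdM2 : \det (1 - Em (1 - b) (- p) (- q) (- t)) != 0 by rewrite -AEm -EDi.
have [n1 [hn1 [f1 [fd1 fc1]]]] := core c0 c2 hq hdM1.
have [n2 [hn2 [f2 [fd2 fc2]]]] := core (- c0) (- c2) hq2 hdM2.
have relP1 z z' : tw_conj (d, D) (toR z, 1%:M) (toR z', 1%:M) <->
    relc (1 - Em b p q t) (cv3 c0 (2 * c0) c2) z z'.
  have h := relP hD hDA eDi eci (Bi := 1%:M) (or_introl erefl) z z'.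
  by rewrite map_mx1 !mul1mx EDi eci' in h.
have relP2 z z' : tw_conj (d, D) (toR z, Amat R) (toR z', Amat R) <->
    relc (1 - Em (1 - b) (- p) (- q) (- t)) (cv3 (- c0) (2 * - c0) (- c2)) z z'.
  have h := relP hD hDA eDi eci (Bi := Ai) (or_intror erefl) z z'.
  rewrite -AmatE EDi AEm eci' (_ : Ai *m _ = cv3 (- c0) (2 * - c0) (- c2)) // in h.
  by rewrite /Ai mx3_cv3; congr cv3; ring.
have hn2' : (2 %| - c2)%Z = (2 %| c2)%Z.
  by apply/dvdzP/dvdzP => -[m hm]; exists (- m); rewrite mulNr -hm ?opprK.
rewrite hn2' in hn2.
rewrite /abs_inf (negbTE h1) (negbTE h2) addr0 -EFinD /=.
exists (n1 + n2)%N; split.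
  rewrite det1E det2E -!intr_norm -!natr_absz EDi AEm.
  have h1' := congr1 (fun x : nat => x%:R : R) hn1.
  have h2' := congr1 (fun x : nat => x%:R : R) hn2.
  rewrite /= !natrM !natrD in h1' h2'.
  rewrite /delta hdelta natrD.
  by case: (2 %| c2)%Z in h1' h2' *; lra.
pose F (i : 'I_(n1 + n2)) : aff R :=
  match split i with inl a => (toR (f1 a), 1%:M) | inr a => (toR (f2 a), Amat R) end.
have hB1 : isB (1%:M : 'M[R]_3) by left.
have hBA : isB (Amat R) by right.
exists F; split.
  move=> i; rewrite /F; case: (split i) => a; apply/GammaP; split => /=.
  - by exists (f1 a).
  - by left.
  - by exists (f2 a).
  - by right.
split.
  move=> i j; rewrite /F; case Si: (split i) => [a|a]; case Sj: (split j) => [a'|a'] => hij.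
  - move/relP1/fd1: hij => eaa.
    by rewrite -(splitK i) -(splitK j) Si Sj eaa.
  - case/(twP d hD hDA _ _ _ hBA): hij => E _; exfalso.
    by apply: (negP (@AR_neq1 R)); apply/eqP; rewrite -E.
  - case/(twP d hD hDA _ _ _ hB1): hij => E _; exfalso.
    by apply: (negP (@AR_neq1 R)); apply/eqP; rewrite E.
  - move/relP2/fd2: hij => eaa.
    by rewrite -(splitK i) -(splitK j) Si Sj eaa.
move=> g /GammaP [[zi ez] hB].
case: g ez hB => z B /= -> [] ->.
  have [a ha] := fc1 zi.
  by exists (unsplit (inl a)); rewrite /F unsplitK; apply/relP1.
have [a ha] := fc2 zi.
by exists (unsplit (inr a)); rewrite /F unsplitK; apply/relP2.
Qed.
End Main.

Theorem proposition5p12 (R : realType) (d : 'cV[R]_3) (D : 'M[R]_3) :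
  xi_aut_Gamma (d, D) ->
  let delta : R := if third_comp d \is a Num.int then 1 else 0 in
  reidemeister_eq (d, D)
    ((2^-1)%:E * (\sum_(A <- holF R) abs_inf (\det (1%:M - A *m D)))
       + (4 * delta)%:E)%E.
Proof. exact: main_R. Qed.
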